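(* Let $\sigma$ be any argumentation semantics whose extensions are maximal conflict-free sets (w.r.t. set inclusion). For every two argumentation frameworks $AF=(AR,Attacks)$, $AF'=(AR',Attacks')$ with $AF\preceq_N AF'$: if for all $E\in\sigma(AF)$ and all $E'\in\sigma(AF')$ we have $E\subseteq E'$, then for all $E\in\sigma(AF)$ and all $E'\in\sigma(AF')$ we have $E'\not\subseteq AR$ or $E'=E$.
   Context: An argumentation framework is a pair $(AR,Attacks)$ with $AR$ a finite set and $Attacks\subseteq AR\times AR$; $a$ attacks $b$ iff $(a,b)\in Attacks$. A set $S$ is conflict-free iff no element of $S$ attacks an element of $S$. An argumentation semantics $\sigma$ assigns to each argumentation framework a set $\sigma(AF)$ of subsets of $AR$; ''$\sigma$'s extensions are maximal conflict-free sets'' means that for every $AF$, every $E\in\sigma(AF)$ is a $\subseteq$-maximal conflict-free subset of the argument set of $AF$. $AF\preceq_N AF'$ (normal expansion) iff $AR\subseteq AR'$, $Attacks\subseteq Attacks'$ and no $(a,b)\in Attacks'\setminus Attacks$ has both $a,b\in AR$. *)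

(* Defs.v *)
From HB Require Import structures.
From mathcomp Require Import all_boot.
From mathcomp Require Import finmap.
Set Implicit Arguments. Unset Strict Implicit. Unset Printing Implicit Defensive.
Local Open Scope fset_scope.

Record AF (U : choiceType) := mkAF {
  AR : {fset U};
  Attacks : {fset (U * U)};
  Attacks_wf : forall a b, (a, b) \in Attacks -> a \in AR /\ b \in AR
}.

Definition attacks (U : choiceType) (F : AF U) (a b : U) : Prop :=
  (a, b) \in Attacks F.

Definition semantics (U : choiceType) := AF U -> {fset U} -> Prop.

Definition conflict_free (U : choiceType) (F : AF U) (S : {fset U}) : Prop :=
  forall a b, a \in S -> b \in S -> ~ attacks F a b.

Definition maximal_conflict_free (U : choiceType) (F : AF U) (S : {fset U}) : Prop :=
  [/\ S `<=` AR F, conflict_free F S &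
      forall T : {fset U}, S `<=` T -> T `<=` AR F -> conflict_free F T -> T = S].

Definition extensions_maximal_cf (U : choiceType) (sigma : semantics U) : Prop :=
  forall (F : AF U) (E : {fset U}), sigma F E -> maximal_conflict_free F E.

Definition normal_expansion (U : choiceType) (F F' : AF U) : Prop :=
  [/\ AR F `<=` AR F', Attacks F `<=` Attacks F' &
      forall a b, (a, b) \in Attacks F' -> (a, b) \notin Attacks F ->
        ~ (a \in AR F /\ b \in AR F)].

(* Main.v *)
Require Import Defs.
From HB Require Import structures.
From mathcomp Require Import all_boot.
From mathcomp Require Import finmap.
Local Open Scope fset_scope.

Theorem proposition52 (U : choiceType) (sigma : semantics U) :
  extensions_maximal_cf sigma ->
  forall F F' : AF U, normal_expansion F F' ->
  (forall E E' : {fset U}, sigma F E -> sigma F' E' -> E `<=` E') ->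
  forall E E' : {fset U}, sigma F E -> sigma F' E' ->
    ~ (E' `<=` AR F) \/ E' = E.
Proof.
move=> Hmax F F' [HAR HAtt Hnew] Hsub E E' HE HE'.
case: (boolP (E' `<=` AR F)) => HE'F; last by left; apply/negP.
right.
have [_ _ Hm] := Hmax F E HE.
have [_ Hcf' _] := Hmax F' E' HE'.
apply: Hm => //; first exact: Hsub.
move=> a b Ha Hb Hab; apply: (Hcf' a b Ha Hb).
rewrite /attacks; exact: (fsubsetP HAtt).
Qed.
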